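(* Let $q\ge1$, $d=2^q$. For $\tau\in\boldsymbol{\sigma}_q$ let $\mathcal{C}_q^\tau=\{C\in\mathcal{C}_q: C\tau C^\dagger=\pm\tau\}$. Let $V=\mathrm{span}\{\sigma\otimes\hat\sigma:\sigma,\hat\sigma\in\boldsymbol{\sigma}_q,\ \sigma\neq\hat\sigma\}\subseteq\mathcal{M}_d^{\otimes2}$ and, for $\tau\in\boldsymbol{\sigma}_q$, $V^\tau=\mathrm{span}\{\sigma\otimes\hat\sigma:\sigma,\hat\sigma\in\boldsymbol{\sigma}_q,\ \sigma\hat\sigma\in\mathbb{C}\tau\}$. Then: (1) $V=\bigoplus_{\tau'\in\boldsymbol{\sigma}_q}V^{\tau'}$. (2) Suppose that for some $\tau\in\boldsymbol{\sigma}_q$ there is a subspace $W^\tau\subseteq V^\tau$ with $\varphi^{\otimes2}(\hat C)W^\tau\subseteq W^\tau$ for all $\hat C\in\mathcal{C}_q^\tau$. Then for every $\tau'\in\boldsymbol{\sigma}_q$ there exists a subspace $W^{\tau'}\subseteq V^{\tau'}$ isomorphic to $W^\tau$ (with $W^{\tau'}$ for $\tau'=\tau$ being $W^\tau$) such that $W=\bigoplus_{\tau'\in\boldsymbol{\sigma}_q}W^{\tau'}$ satisfies $\varphi^{\otimes2}(C)W\subseteq W$ for all $C\in\mathcal{C}_q$.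
   Context: $\mathcal{M}_d$ is the space of complex $d\times d$ matrices. $X,Y,Z$ are the single-qubit Pauli matrices; $\hat{\mathcal{P}}_q$ is the set of $q$-fold tensor products of elements of $\{\mathbb{1},X,Y,Z\}$; $\boldsymbol{\sigma}_q=\{P/\sqrt d:P\in\hat{\mathcal P}_q\setminus\{\mathbb 1\}\}$. The Pauli group $\mathcal{P}_q\subset U(2^q)$ consists of all $q$-fold tensor products of elements of the group generated by $X,Z,i\mathbb 1_2$; the Clifford group is $\mathcal{C}_q=\{U\in U(2^q):U\mathcal{P}_qU^\dagger\subseteq\mathcal{P}_q\}/U(1)$ (conjugation by $C$ maps each element of $\boldsymbol\sigma_q$ to $\pm$ an element of $\boldsymbol\sigma_q$). The two-copy representation on $\mathcal{M}_d^{\otimes2}$ is $\varphi^{\otimes2}(C)(A\otimes B)=(CAC^\dagger)\otimes(CBC^\dagger)$, extended linearly. *)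

(* Defs.v *)
(* Complex scalars: an arbitrary numClosedFieldType C
   (e.g. the complex numbers), with conjugation conjC and 'i. *)
From HB Require Import structures.
From mathcomp Require Import all_boot all_order all_algebra all_fingroup.
From mathcomp Require Import character.
Set Implicit Arguments. Unset Strict Implicit. Unset Printing Implicit Defensive.
Import Order.TTheory GRing.Theory Num.Theory Num.Def.
Local Open Scope ring_scope.

Section Pauli.
Variable C : numClosedFieldType.

Definition adjmx m n (A : 'M[C]_(m, n)) : 'M[C]_(n, m) := (map_mx conjC A)^T.

Definition pauliX : 'M[C]_2 := \matrix_(i < 2, j < 2) (if i == j then 0 else 1).
Definition pauliY : 'M[C]_2 :=
  \matrix_(i < 2, j < 2) (if i == j then 0 else if i == 0 :> nat then - 'i else 'i).
Definition pauliZ : 'M[C]_2 :=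
  \matrix_(i < 2, j < 2) (if i == j then (if i == 0 :> nat then 1 else -1) else 0).
Definition pauli1 (a : 'I_4) : 'M[C]_2 :=
  match val a with 0 => 1%:M | 1 => pauliX | 2 => pauliY | _ => pauliZ end.

(* bit k of a basis index i of (C^2)^{\otimes q} = C^(2^q) *)
Definition qbit q (i : 'I_(2 ^ q)) (k : 'I_q) : 'I_2 := inord (odd (i %/ 2 ^ k)).

Definition pstring q := {ffun 'I_q -> 'I_4}.
HB.instance Definition _ q := Finite.on (pstring q).
Definition pauli_str q (s : pstring q) : 'M[C]_(2 ^ q) :=
  \matrix_(i, j) \prod_(k < q) pauli1 (s k) (qbit i k) (qbit j k).

(* index set of boldsymbol-sigma_q: non-identity Pauli strings *)
Definition Sig q := {s : pstring q | s != [ffun => ord0]}.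
HB.instance Definition _ q := Finite.on (Sig q).
Definition sigq q (s : Sig q) : 'M[C]_(2 ^ q) :=
  (sqrtC (2 ^ q)%:R)^-1 *: pauli_str (val s).

(* Pauli group: q-fold tensor products of elements of <X, Z, i 1>,
   i.e. the matrices i^k P with P a Pauli string *)
Definition pauli_grp q (M : 'M[C]_(2 ^ q)) : Prop :=
  exists (k : nat) (s : pstring q), M = ('i ^+ k) *: pauli_str s.

Definition unitary n (U : 'M[C]_n) : Prop := U *m adjmx U = 1%:M.

(* Clifford group (representatives; the U(1) quotient is irrelevant for the
   conjugation actions considered) *)
Definition clifford q (U : 'M[C]_(2 ^ q)) : Prop :=
  unitary U /\ forall P, pauli_grp P -> pauli_grp (U *m P *m adjmx U).

Definition clifford_tau q (tau : Sig q) (U : 'M[C]_(2 ^ q)) : Prop :=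
  clifford U /\
  (U *m sigq tau *m adjmx U = sigq tau \/ U *m sigq tau *m adjmx U = - sigq tau).

(* two-copy representation on M_d (x) M_d, realised as d^2 x d^2 matrices
   via the Kronecker product tprod (character.v) *)
Definition phi2 q (U : 'M[C]_(2 ^ q)) (X : 'M[C]_(2 ^ q * 2 ^ q)) :
  'M[C]_(2 ^ q * 2 ^ q) := tprod U U *m X *m adjmx (tprod U U).

Definition Vspace q : {vspace 'M[C]_(2 ^ q * 2 ^ q)} :=
  <<[seq tprod (sigq st.1) (sigq st.2) | st <- enum ((Sig q * Sig q)%type : predArgType)
      & sigq st.1 != sigq st.2]>>%VS.

Definition Vtau q (tau : Sig q) : {vspace 'M[C]_(2 ^ q * 2 ^ q)} :=
  <<[seq tprod (sigq st.1) (sigq st.2) | st <- enum ((Sig q * Sig q)%type : predArgType)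
      & (sigq st.1 *m sigq st.2) \in <[sigq tau]>%VS]>>%VS.

Definition phi2_stable q (U : 'M[C]_(2 ^ q)) (W : {vspace 'M[C]_(2 ^ q * 2 ^ q)}) :=
  forall X, X \in W -> phi2 U X \in W.

Definition vs_iso n (W W' : {vspace 'M[C]_n}) : Prop :=
  exists f : 'End('M[C]_n), (f @: W)%VS = W' /\ (lker f :&: W)%VS = 0%VS.

End Pauli.

(* Main.v *)
From HB Require Import structures.
From mathcomp Require Import all_boot all_order all_algebra all_fingroup.
From mathcomp Require Import character zify.
Require Import Defs.
Set Implicit Arguments. Unset Strict Implicit. Unset Printing Implicit Defensive.
Import Order.TTheory GRing.Theory Num.Theory Num.Def.
Local Open Scope ring_scope.
Lemma trow_entry (F : fieldType) n1 (A : 'rV[F]_n1) m2 n2 (B : 'M[F]_(m2,n2))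
  (i : 'I_m2) (l : 'I_(n1 * n2)) (j1 : 'I_n1) (j2 : 'I_n2) :
  val l = (j1 * n2 + j2)%N -> trow A B i l = A 0 j1 * B i j2.
Proof.
elim: n1 A l j1 => [|n1 IH] A l j1; first by case: j1.
move=> hl /=; rewrite mxE.
case: splitP => [l' hl'|l' hl'].
  case: j1 hl => [[|j1] hj1] /= hl.
    rewrite !mxE; congr (_ * _); first by congr (A _ _); apply: val_inj.
    by congr (B _ _); apply: val_inj; rewrite /= -hl' hl.
  have := ltn_ord l'; rewrite -hl' hl; lia.
case: j1 hl => [[|j1] hj1] /= hl.
  have := ltn_ord j2; rewrite hl' in hl; lia.
have hj1' : (j1 < n1)%N by [].
rewrite (IH _ _ (Ordinal hj1')) /=; last by move: hl; rewrite hl' /= mulSn; lia.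
rewrite mxE; congr (_ * _); congr (A _ _); first by apply: val_inj.
Qed.

Lemma tprod_entry (F : fieldType) m1 n1 (A : 'M[F]_(m1,n1)) m2 n2 (B : 'M[F]_(m2,n2))
  (k : 'I_(m1 * m2)) (l : 'I_(n1 * n2)) (i1 : 'I_m1) (i2 : 'I_m2) (j1 : 'I_n1) (j2 : 'I_n2) :
  val k = (i1 * m2 + i2)%N -> val l = (j1 * n2 + j2)%N -> tprod A B k l = A i1 j1 * B i2 j2.
Proof.
elim: m1 A k i1 => [|m1 IH] A k i1; first by case: i1.
move=> hk hl /=; rewrite mxE.
case: splitP => [k' hk'|k' hk'].
  case: i1 hk => [[|i1] hi1] /= hk.
    rewrite (trow_entry _ _ _ hl) !mxE; congr (_ * _); first by congr (A _ _); apply: val_inj.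
    by congr (B _ _); apply: val_inj; rewrite /= -hk' hk.
  have := ltn_ord k'; rewrite -hk' hk; lia.
case: i1 hk => [[|i1] hi1] /= hk.
  have := ltn_ord i2; rewrite hk' in hk; lia.
have hi1' : (i1 < m1)%N by [].
rewrite (IH _ _ (Ordinal hi1') _ hl) /=; last by move: hk; rewrite hk' /= mulSn; lia.
rewrite mxE; congr (_ * _); congr (A _ _); first by apply: val_inj.
Qed.

Definition m4n (a b : nat) : nat := match a, b with
 | 0, b => b | a, 0 => a | 1,1 => 0 | 1,2 => 3 | 1,3 => 2 | 2,1 => 3 | 2,2 => 0
 | 2,3 => 1 | 3,1 => 2 | 3,2 => 1 | _, _ => 0 end.
Definition m4 (a b : 'I_4) : 'I_4 := inord (m4n a b).
Definition e4 (a b : nat) : nat := match a, b with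
 | 1,2 => 1 | 2,1 => 3 | 2,3 => 1 | 3,2 => 3 | 3,1 => 1 | 1,3 => 3 | _,_ => 0 end.
Definition ac4 (a b : 'I_4) : bool := [&& (val a != 0)%N, (val b != 0)%N & (val a != val b)].

Ltac ord4 a := let h := fresh "h" in case: a => [[|[|[|[|a]]]] h] //.
Ltac ord2 a := let h := fresh "h" in case: a => [[|[|a]] h] //.

Section S.
Variable C : numClosedFieldType.

Lemma ii : 'i * 'i = -1 :> C. Proof. by rewrite -expr2 sqrCi. Qed.


Lemma p1M (a b : 'I_4) : pauli1 C a *m pauli1 C b = 'i ^+ (e4 a b) *: pauli1 C (m4 a b).
Proof.
ord4 a; ord4 b; rewrite /m4 /= /pauli1 /=;
apply/matrixP => i j; rewrite !mxE !big_ord_recl !big_ord0 !mxE; rewrite !inordK //=; ord2 i; ord2 j;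
rewrite /= ?expr0 ?expr1 ?scale1r; rewrite ?mxE /=; 
rewrite ?(mul0r, mulr0, add0r, addr0, mul1r, mulr1, mulrN, mulNr, opprK, oppr0, ii, exprS, expr0); try done.
Qed.
Lemma p1adj (a : 'I_4) : adjmx (pauli1 C a) = pauli1 C a.
Proof.
ord4 a; rewrite /adjmx /pauli1 /=; apply/matrixP => i j; rewrite !mxE; ord2 i; ord2 j;
rewrite /= ?mxE /= ?(rmorph0, rmorph1, rmorphN, conjCi, opprK) //.
all: have hc : Num.Num_conj__canonical__GRing_RMorphism C (@Num.imaginary C) = - @Num.imaginary C := conjCi C.
all: by rewrite ?hc ?opprK.
Qed.

Lemma p1tr (a : 'I_4) : \tr (pauli1 C a) = if val a == 0%N then 2 else 0.
Proof.
ord4 a; rewrite /mxtrace /pauli1 /= !big_ord_recl !big_ord0 !mxE /=; rewrite ?mxE /=;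
rewrite ?(mul0r, mulr0, add0r, addr0, mul1r, mulr1, subrr) //.
Qed.

Lemma p1comm (a b : 'I_4) :
  pauli1 C b *m pauli1 C a = (-1) ^+ ac4 a b *: (pauli1 C a *m pauli1 C b).
Proof.
ord4 a; ord4 b; rewrite /ac4 /= /pauli1 /=;
apply/matrixP => i j; rewrite !mxE !big_ord_recl !big_ord0 !mxE; ord2 i; ord2 j;
rewrite /= ?expr0 ?expr1 ?scale1r; rewrite ?mxE /=; 
rewrite ?(mul0r, mulr0, add0r, addr0, mul1r, mulr1, mulrN, mulNr, opprK, oppr0, ii, exprS, expr0); try done.
Qed.

Lemma adjmxM m n p (A : 'M[C]_(m, n)) (B : 'M[C]_(n, p)) :
  adjmx (A *m B) = adjmx B *m adjmx A.
Proof. by rewrite /adjmx map_mxM trmx_mul. Qed.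
Lemma adjmxD m n (A B : 'M[C]_(m, n)) : adjmx (A + B) = adjmx A + adjmx B.
Proof. by apply/matrixP => i j; rewrite !mxE rmorphD. Qed.
Lemma adjmxN m n (A : 'M[C]_(m, n)) : adjmx (- A) = - adjmx A.
Proof. by apply/matrixP => i j; rewrite !mxE rmorphN. Qed.
Lemma adjmxZ m n (a : C) (A : 'M[C]_(m, n)) : adjmx (a *: A) = a^* *: adjmx A.
Proof. by apply/matrixP => i j; rewrite !mxE rmorphM. Qed.
Lemma adjmxK m n (A : 'M[C]_(m, n)) : adjmx (adjmx A) = A.
Proof. by apply/matrixP => i j; rewrite !mxE conjCK. Qed.
Lemma adjmx1 n : adjmx (1%:M : 'M[C]_n) = 1%:M.
Proof. by apply/matrixP => i j; rewrite !mxE eq_sym; case: eqP; rewrite ?rmorph1 ?rmorph0. Qed.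
Lemma adjmx_tprod m1 n1 m2 n2 (A : 'M[C]_(m1, n1)) (B : 'M[C]_(m2, n2)) :
  adjmx (tprod A B) = tprod (adjmx A) (adjmx B).
Proof.
apply/matrixP => k l; rewrite !mxE.
have [i1 [i2 hk]] : exists (i1 : 'I_n1) (i2 : 'I_n2), val k = (i1 * n2 + i2)%N.
  have n2p : (0 < n2)%N by case: n2 k {A B} => [|//] k; rewrite muln0 in k; case: k.
  have h1 : (k %/ n2 < n1)%N by rewrite ltn_divLR // ltn_ord.
  by exists (Ordinal h1), (Ordinal (ltn_pmod k n2p)); rewrite /= -div.divn_eq.
have [j1 [j2 hl]] : exists (j1 : 'I_m1) (j2 : 'I_m2), val l = (j1 * m2 + j2)%N.
  have m2p : (0 < m2)%N by case: m2 l {A B} => [|//] l; rewrite muln0 in l; case: l.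
  have h1 : (l %/ m2 < m1)%N by rewrite ltn_divLR // ltn_ord.
  by exists (Ordinal h1), (Ordinal (ltn_pmod l m2p)); rewrite /= -div.divn_eq.
by rewrite (tprod_entry _ _ hk hl) (tprod_entry _ _ hl hk) !mxE rmorphM.
Qed.
Lemma tprodZ m1 n1 m2 n2 (a b : C) (A : 'M[C]_(m1, n1)) (B : 'M[C]_(m2, n2)) :
  tprod (a *: A) (b *: B) = (a * b) *: tprod A B.
Proof.
apply/matrixP => k l; rewrite !mxE.
have [i1 [i2 hk]] : exists (i1 : 'I_m1) (i2 : 'I_m2), val k = (i1 * m2 + i2)%N.
  have n2p : (0 < m2)%N by case: m2 k {A B} => [|//] k; rewrite muln0 in k; case: k.
  have h1 : (k %/ m2 < m1)%N by rewrite ltn_divLR // ltn_ord.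
  by exists (Ordinal h1), (Ordinal (ltn_pmod k n2p)); rewrite /= -div.divn_eq.
have [j1 [j2 hl]] : exists (j1 : 'I_n1) (j2 : 'I_n2), val l = (j1 * n2 + j2)%N.
  have m2p : (0 < n2)%N by case: n2 l {A B} => [|//] l; rewrite muln0 in l; case: l.
  have h1 : (l %/ n2 < n1)%N by rewrite ltn_divLR // ltn_ord.
  by exists (Ordinal h1), (Ordinal (ltn_pmod l m2p)); rewrite /= -div.divn_eq.
rewrite (tprod_entry _ _ hk hl) (tprod_entry _ _ hk hl) !mxE.
by rewrite mulrACA.
Qed.

Lemma anti1_ac (x : 'I_4) : val x != 0%N -> ac4 x (if val x == 1%N then inord 3 else inord 1).
Proof. by ord4 x; rewrite /ac4 /= ?inordK. Qed.
Lemma third_ac (x y : 'I_4) : val x != 0%N -> val y != 0%N -> val x != val y ->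
  ac4 x (m4 x y) && ac4 y (m4 x y).
Proof. by ord4 x; ord4 y; rewrite /ac4 /m4 /= ?inordK. Qed.

Lemma p1sq (a : 'I_4) : pauli1 C a *m pauli1 C a = 1%:M.
Proof.
ord4 a; rewrite /pauli1 /=;
apply/matrixP => i j; rewrite !mxE !big_ord_recl !big_ord0 !mxE; ord2 i; ord2 j;
rewrite /= ?mxE /=;
rewrite ?(mul0r, mulr0, add0r, addr0, mul1r, mulr1, mulrN, mulNr, opprK, oppr0, ii); try done.
Qed.

End S.

Lemma odd_bits_inj q (i j : nat) : (i < 2 ^ q)%N -> (j < 2 ^ q)%N ->
  (forall k, (k < q)%N -> odd (i %/ 2 ^ k) = odd (j %/ 2 ^ k)) -> i = j.
Proof.
elim: q i j => [|q IH] i j hi hj h; first by move: hi hj; rewrite expn0; lia.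
have h0 := h 0%N isT; rewrite expn0 !divn1 in h0.
have e : (i %/ 2 = j %/ 2)%N.
  apply: IH.
  - by rewrite ltn_divLR // -expnSr.
  - by rewrite ltn_divLR // -expnSr.
  move=> k hk; rewrite -!divnMA -expnS; exact: h.
by rewrite (div.divn_eq i 2) (div.divn_eq j 2) e !modn2 h0.
Qed.

Section Pauli.
Variable C : numClosedFieldType.
Variable q : nat.

Definition bits (i : 'I_(2 ^ q)) : {ffun 'I_q -> 'I_2} := [ffun k => qbit i k].

Lemma bits_inj : injective bits.
Proof.
move=> i j /ffunP h; apply: val_inj; apply: (@odd_bits_inj q) => [||k hk]; rewrite ?ltn_ord //.
have := h (Ordinal hk); rewrite !ffunE /qbit => /(congr1 val) /=.
rewrite /= !inordK; [|exact: leq_b1|exact: leq_b1]; by case: (odd (i %/ _)); case: (odd (j %/ _)).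
Qed.

Lemma bits_bij : bijective bits.
Proof. apply: (@inj_card_bij _ _ bits bits_inj); by rewrite card_ffun !card_ord. Qed.

Definition K (M : 'I_q -> 'M[C]_2) : 'M[C]_(2 ^ q) :=
  \matrix_(i, j) \prod_(k < q) M k (qbit i k) (qbit j k).

Lemma sum_bits (F : {ffun 'I_q -> 'I_2} -> C) :
  \sum_(l : 'I_(2 ^ q)) F (bits l) = \sum_f F f.
Proof.
by rewrite (reindex bits) //; case: bits_bij => g h1 h2; exists g.
Qed.

Lemma KM (M N : 'I_q -> 'M[C]_2) : K M *m K N = K (fun k => M k *m N k).
Proof.
apply/matrixP => i j; rewrite !mxE.
under eq_bigr do rewrite !mxE -big_split /=.
under [RHS]eq_bigr do rewrite mxE.
rewrite bigA_distr_bigA /= -(sum_bits (fun f => \prod_(k < q) (M k (qbit i k) (f k) * N k (f k) (qbit j k)))).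
by apply: eq_bigr => l _; apply: eq_bigr => k _; rewrite ffunE.
Qed.

Lemma Ktr (M : 'I_q -> 'M[C]_2) : \tr (K M) = \prod_(k < q) \tr (M k).
Proof.
rewrite /mxtrace; under eq_bigr do rewrite mxE.
rewrite bigA_distr_bigA /= -(sum_bits (fun f => \prod_(k < q) M k (f k) (f k))).
by apply: eq_bigr => l _; apply: eq_bigr => k _; rewrite ffunE.
Qed.

Lemma Kadj (M : 'I_q -> 'M[C]_2) : adjmx (K M) = K (fun k => adjmx (M k)).
Proof.
apply/matrixP => i j; rewrite !mxE rmorph_prod; apply: eq_bigr => k _.
by rewrite !mxE.
Qed.

Lemma KZ (c : 'I_q -> C) (M : 'I_q -> 'M[C]_2) :
  K (fun k => c k *: M k) = (\prod_(k < q) c k) *: K M.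
Proof.
apply/matrixP => i j; rewrite !mxE -big_split; apply: eq_bigr => k _.
by rewrite !mxE.
Qed.

Lemma K_ext (M N : 'I_q -> 'M[C]_2) : (forall k, M k = N k) -> K M = K N.
Proof. by move=> h; apply/matrixP => i j; rewrite !mxE; apply: eq_bigr => k _; rewrite h. Qed.

Lemma K1 : K (fun _ => 1%:M) = 1%:M.
Proof.
apply/matrixP => i j; rewrite !mxE.
case: eqP => [->|ne].
  by rewrite big1 // => k _; rewrite mxE eqxx.
have [k hk] : exists k, qbit i k != qbit j k.
  apply/existsP; rewrite -negb_forall; apply/negP => /forallP hn; apply: ne.
  by apply: bits_inj; apply/ffunP => k; rewrite !ffunE; apply/eqP/hn.
by rewrite (bigD1 k) //= mxE (negbTE hk) mul0r.
Qed.

Definition idstr : pstring q := [ffun => ord0].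
Definition mulstr (s r : pstring q) : pstring q := [ffun k => m4 (s k) (r k)].
Definition estr (s r : pstring q) : nat := (\sum_k e4 (s k) (r k))%N.
Definition nstr (s r : pstring q) : nat := (\sum_k ac4 (s k) (r k))%N.
Notation P := (pauli_str C).

Lemma pstrK (s : pstring q) : P s = K (fun k => pauli1 C (s k)). Proof. by []. Qed.

Lemma pstr_mul (s r : pstring q) : P s *m P r = 'i ^+ estr s r *: P (mulstr s r).
Proof.
rewrite !pstrK KM (@K_ext _ (fun k => 'i ^+ e4 (s k) (r k) *: pauli1 C (mulstr s r k))).
  by rewrite KZ prodrXr.
by move=> k; rewrite p1M ffunE.
Qed.

Lemma pstr_adj (s : pstring q) : adjmx (P s) = P s.
Proof. by rewrite pstrK Kadj; apply: K_ext => k; rewrite p1adj. Qed.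

Lemma pstr_sq (s : pstring q) : P s *m P s = 1%:M.
Proof. by rewrite pstrK KM -K1; apply: K_ext => k; rewrite p1sq. Qed.

Lemma pstr_comm (s r : pstring q) : P r *m P s = (-1) ^+ nstr s r *: (P s *m P r).
Proof.
rewrite !pstrK !KM (@K_ext _ (fun k => (-1) ^+ ac4 (s k) (r k) *: (pauli1 C (s k) *m pauli1 C (r k)))).
  by rewrite KZ prodrXr.
by move=> k; rewrite p1comm.
Qed.

Lemma pstr_tr (s : pstring q) : \tr (P s) = if s == idstr then (2 ^ q)%:R else 0.
Proof.
rewrite pstrK Ktr; under eq_bigr do rewrite p1tr.
case: eqP => [->|ne].
  rewrite natrX (eq_bigr (fun _ => 2)); first by rewrite prodr_const card_ord.
  by move=> k _; rewrite ffunE.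
have [k hk] : exists k, s k != ord0.
  apply/existsP; rewrite -negb_forall; apply/negP => /forallP hn; apply: ne.
  by apply/ffunP => k; rewrite ffunE; apply/eqP/hn.
rewrite (bigD1 k) //= ifF ?mul0r //; apply/negbTE; exact: hk.
Qed.

Lemma m4_eq0 (a b : 'I_4) : (m4 a b == ord0) = (a == b).
Proof. by ord4 a; ord4 b; rewrite -val_eqE /m4 /= inordK. Qed.

Lemma mulstr_id (s r : pstring q) : (mulstr s r == idstr) = (s == r).
Proof.
apply/eqP/eqP => [/ffunP h|->].
  apply/ffunP => k; have := h k; rewrite !ffunE => /eqP; rewrite m4_eq0; exact/eqP.
by apply/ffunP => k; rewrite !ffunE; apply/eqP; rewrite m4_eq0.
Qed.

Lemma d_gt0 : (0 < 2 ^ q)%N. Proof. by rewrite expn_gt0. Qed.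
Definition i0 : 'I_(2 ^ q) := Ordinal d_gt0.

Lemma mx1_neq0 : (1%:M : 'M[C]_(2 ^ q)) != 0.
Proof. by apply/eqP => /matrixP /(_ i0 i0); rewrite !mxE eqxx; apply/eqP; exact: oner_neq0. Qed.

Lemma dR_neq0 : ((2 ^ q)%:R : C) != 0.
Proof. by rewrite pnatr_eq0 expn_eq0. Qed.

Lemma pstr_trM (s r : pstring q) : \tr (P s *m P r) = if s == r then (2 ^ q)%:R else 0.
Proof.
case: eqP => [->|/eqP ne]; first by rewrite pstr_sq mxtrace1.
by rewrite pstr_mul mxtraceZ pstr_tr mulstr_id (negbTE ne) mulr0.
Qed.

Lemma pstr_nonscalar (s : pstring q) (c : C) : P s = c *: 1%:M -> s = idstr.
Proof.
move=> h; apply/eqP; apply/negPn/negP => ne.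
have := congr1 mxtrace h; rewrite pstr_tr (negbTE ne) mxtraceZ mxtrace1 => /esym /eqP.
rewrite mulf_eq0 (negbTE dR_neq0) orbF => /eqP c0.
move: (pstr_sq s); rewrite h c0 scale0r mul0mx => /esym /eqP; apply/negP; exact: mx1_neq0.
Qed.

Definition kap : C := (sqrtC (2 ^ q)%:R)^-1.
Lemma sigqE (t : Sig q) : sigq C t = kap *: P (val t). Proof. by []. Qed.
Lemma kap_neq0 : kap != 0.
Proof. by rewrite invr_eq0 sqrtC_eq0 dR_neq0. Qed.
Lemma kap2 : kap * kap * (2 ^ q)%:R = 1.
Proof. by rewrite -invrM ?unitfE ?sqrtC_eq0 ?dR_neq0 // -expr2 sqrtCK mulVf ?dR_neq0. Qed.
Lemma kap_conj : kap^* = kap.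
Proof. by rewrite geC0_conj // invr_ge0 sqrtC_ge0 ler0n. Qed.

Lemma sigq_adj (t : Sig q) : adjmx (sigq C t) = sigq C t.
Proof. by rewrite sigqE adjmxZ kap_conj pstr_adj. Qed.

Lemma sigq_sq (t : Sig q) : sigq C t *m sigq C t = (kap * kap) *: 1%:M.
Proof. by rewrite sigqE -scalemxAl -scalemxAr pstr_sq scalerA. Qed.

Lemma sigq_trM (s t : Sig q) : \tr (sigq C s *m sigq C t) = if s == t then 1 else 0.
Proof.
rewrite !sigqE -scalemxAl -scalemxAr scalerA mxtraceZ pstr_trM.
case: (s =P t) => [->|ne]; first by rewrite eqxx kap2.
by rewrite ifF ?mulr0 //; apply/negbTE/eqP => /val_inj.
Qed.

Lemma pg_str (s : pstring q) : pauli_grp (P s).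
Proof. by exists 0%N, s; rewrite expr0 scale1r. Qed.

Lemma pg_scale (m : nat) (X : 'M[C]_(2 ^ q)) : pauli_grp X -> pauli_grp ('i ^+ m *: X).
Proof. by case=> k [s ->]; exists (m + k)%N, s; rewrite scalerA exprD. Qed.

Lemma pg_opp (X : 'M[C]_(2 ^ q)) : pauli_grp X -> pauli_grp (- X).
Proof. by move=> /(pg_scale 2); rewrite sqrCi scaleN1r. Qed.

Lemma pg_mul (X Y : 'M[C]_(2 ^ q)) : pauli_grp X -> pauli_grp Y -> pauli_grp (X *m Y).
Proof.
case=> k [s ->] [m [r ->]]; rewrite -scalemxAl -scalemxAr pstr_mul !scalerA -!exprD.
exact: pg_scale (pg_str _).
Qed.

Lemma clifford_mul (U V : 'M[C]_(2 ^ q)) : clifford U -> clifford V -> clifford (U *m V).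
Proof.
case=> hu hU [hv hV]; split.
  by rewrite /unitary adjmxM mulmxA -(mulmxA U) hv mulmx1 hu.
by move=> X /hV /hU; rewrite adjmxM !mulmxA.
Qed.

Lemma clifford1 : clifford (1%:M : 'M[C]_(2 ^ q)).
Proof. by split; [rewrite /unitary adjmx1 mulmx1|move=> X; rewrite adjmx1 mulmx1 mul1mx]. Qed.

Lemma P_id : P idstr = 1%:M.
Proof. by rewrite pstrK -K1; apply: K_ext => k; rewrite ffunE. Qed.

Lemma cliff_sig (U : 'M[C]_(2 ^ q)) (t : Sig q) : clifford U ->
  exists s : Sig q, exists b : bool, U *m sigq C t *m adjmx U = (-1) ^+ b *: sigq C s.
Proof.
case=> hu hP; have hu' := mulmx1C hu.
have [k [r hr]] := hP _ (pg_str (val t)).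
have rnid : r != idstr.
  apply/eqP => rid; move: (valP t); rewrite -/idstr => /negP; apply.
  apply/eqP; apply: (@pstr_nonscalar _ ('i ^+ k)).
  have -> : P (val t) = adjmx U *m (U *m P (val t) *m adjmx U) *m U.
    by rewrite !mulmxA hu' mul1mx -mulmxA hu' mulmx1.
  by rewrite hr rid P_id -scalemxAr mulmx1 -scalemxAl hu'.
have sq : ('i ^+ k) ^+ 2 == 1 :> C.
  have := congr1 (fun X => X *m X) hr => /=.
  rewrite -scalemxAl -scalemxAr pstr_sq scalerA.
  have -> : U *m P (val t) *m adjmx U *m (U *m P (val t) *m adjmx U) = 1%:M.
    by rewrite !mulmxA -(mulmxA _ (adjmx U)) hu' mulmx1 -(mulmxA U) pstr_sq mulmx1 hu.
  move/matrixP/(_ i0 i0); rewrite !mxE eqxx mulr1 => h.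
  by rewrite expr2 -h.
exists (exist _ r rnid); rewrite !sigqE -scalemxAr -scalemxAl hr scalerA /=.
move: sq; rewrite sqrf_eq1 => /orP[/eqP->|/eqP->].
  by exists false; rewrite expr0 mulr1 scale1r.
by exists true; rewrite expr1 scalerA mulrC.
Qed.

Lemma sandwich n (A B X : 'M[C]_n) (al be : C) :
  B *m A = - (A *m B) -> A *m X = al *: (X *m A) -> B *m X = be *: (X *m B) ->
  A *m A = 1%:M -> B *m B = 1%:M ->
  (A + B) *m X *m (A + B) = (al + be) *: X + (al - be) *: (X *m A *m B).
Proof.
move=> hBA hAX hBX hAA hBB.
rewrite mulmxDl !mulmxDr.
have e1 : A *m X *m A = al *: X by rewrite hAX -scalemxAl -mulmxA hAA mulmx1.
have e2 : A *m X *m B = al *: (X *m A *m B) by rewrite hAX -scalemxAl.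
have e3 : B *m X *m A = - be *: (X *m A *m B).
  by rewrite hBX -scalemxAl -mulmxA hBA mulmxN scaleNr scalerN mulmxA.
have e4 : B *m X *m B = be *: X by rewrite hBX -scalemxAl -mulmxA hBB mulmx1.
rewrite !mulmxDl e1 e2 e3 e4 scalerDl scalerBl scaleNr.
by rewrite addrACA [- _ + _]addrC addrACA.
Qed.

Definition cc : C := (sqrtC 2)^-1.
Lemma cc2 : cc * cc * 2 = 1.
Proof.
have h2 : (2 : C) != 0 by rewrite pnatr_eq0.
by rewrite -invrM ?unitfE ?sqrtC_eq0 // -expr2 sqrtCK mulVf.
Qed.
Lemma cc_conj : cc^* = cc.
Proof. by rewrite geC0_conj // invr_ge0 sqrtC_ge0 ler0n. Qed.

Lemma cc2' : cc * cc * (1 + 1) = 1.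
Proof. exact: cc2. Qed.

Definition swapU (a b : pstring q) : 'M[C]_(2 ^ q) := cc *: (P a + P b).

Lemma swap_adj a b : adjmx (swapU a b) = swapU a b.
Proof. by rewrite adjmxZ adjmxD !pstr_adj cc_conj. Qed.

Lemma scal_mid (c : C) (M Y : 'M[C]_(2 ^ q)) : (c *: M) *m Y *m (c *: M) = (c * c) *: (M *m Y *m M).
Proof. by rewrite -!scalemxAl -scalemxAr scalerA. Qed.

Lemma comm_odd (a b : pstring q) : odd (nstr a b) -> P b *m P a = - (P a *m P b).
Proof. by move=> h; rewrite pstr_comm -signr_odd h expr1 scaleN1r. Qed.

Lemma swap_sq a b : odd (nstr a b) -> swapU a b *m swapU a b = 1%:M.
Proof.
move=> h; rewrite -[X in X *m _ = _]mulmx1 scal_mid mulmx1 mulmxDl !mulmxDr !pstr_sq.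
rewrite (comm_odd h) addrA addrK scalerDr -scalerDl -mulr2n -mulr_natr.
by rewrite cc2 scale1r.
Qed.

Lemma swap_map a b : odd (nstr a b) -> swapU a b *m P a *m adjmx (swapU a b) = P b.
Proof.
move=> h; rewrite swap_adj scal_mid.
have hAX : P a *m P a = 1 *: (P a *m P a) by rewrite scale1r.
have hBX : P b *m P a = -1 *: (P a *m P b) by rewrite scaleN1r comm_odd.
rewrite (sandwich (comm_odd h) hAX hBX (pstr_sq a) (pstr_sq b)).
by rewrite addrN scale0r add0r pstr_sq mul1mx opprK scalerA cc2' scale1r.
Qed.

Lemma swap_cliff a b : odd (nstr a b) -> clifford (swapU a b).
Proof.
move=> h; split; first by rewrite /unitary swap_adj swap_sq.
move=> Y [k [r ->]]; rewrite swap_adj /swapU scal_mid -scalemxAr -scalemxAl.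
rewrite scalerA mulrC -scalerA; apply: pg_scale.
rewrite (sandwich (comm_odd h) (pstr_comm r a) (pstr_comm r b) (pstr_sq a) (pstr_sq b)).
rewrite -(signr_odd _ (nstr r a)) -(signr_odd _ (nstr r b)).
case: (odd (nstr r a)); case: (odd (nstr r b)); rewrite ?expr0 ?expr1.
- rewrite subrr scale0r addr0 -opprD scaleNr scalerN scalerA cc2' scale1r.
  exact/pg_opp/pg_str.
- rewrite addNr scale0r add0r -opprD scaleNr scalerN scalerA cc2' scale1r.
  exact/pg_opp/pg_mul/pg_str/pg_mul/pg_str/pg_str.
- rewrite addrN scale0r add0r opprK scalerA cc2' scale1r.
  exact/pg_mul/pg_str/pg_mul/pg_str/pg_str.
- rewrite subrr scale0r addr0 scalerA cc2' scale1r.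
  exact/pg_str.
Qed.

Lemma nid_ex (a : pstring q) : a != idstr -> exists k, val (a k) != 0%N.
Proof.
move=> ne; apply/existsP; rewrite -negb_forall; apply/negP => /forallP hn; move/negP: ne; apply.
by apply/eqP/ffunP => k; rewrite ffunE; apply/val_inj/eqP; move/negPn: (hn k).
Qed.

Definition e1 (l : 'I_q) (y : 'I_4) : pstring q := [ffun k => if k == l then y else ord0].
Lemma nstr_e1 a l y : nstr a (e1 l y) = ac4 (a l) y.
Proof.
rewrite /nstr (bigD1 l) //= big1 ?addn0; first by rewrite ffunE eqxx.
by move=> k /negbTE hk; rewrite ffunE hk /ac4 /= !andbF.
Qed.

Definition e2 (k l : 'I_q) (y z : 'I_4) : pstring q :=
  [ffun x => if x == k then y else if x == l then z else ord0].
Lemma nstr_e2 a k l y z : k != l -> nstr a (e2 k l y z) = (ac4 (a k) y + ac4 (a l) z)%N.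
Proof.
move=> kl; rewrite /nstr (bigD1 k) //= (bigD1 l) 1?eq_sym //= big1 ?addn0.
  by rewrite !ffunE eqxx eq_sym (negbTE kl) eqxx.
by move=> x /andP[/negbTE h1 /negbTE h2]; rewrite ffunE h1 h2 /ac4 /= !andbF.
Qed.

Lemma anti_exists (a b : pstring q) : a != idstr -> b != idstr ->
  exists r, odd (nstr a r) && odd (nstr b r).
Proof.
move=> na nb.
case: (pickP (fun l => (val (a l) != 0%N) && (val (b l) != 0%N))) => [l /andP[hal hbl] | none].
  case: (eqVneq (val (a l)) (val (b l))) => [e|ne].
    exists (e1 l (if val (a l) == 1%N then inord 3 else inord 1)).
    rewrite !nstr_e1 anti1_ac //=.
    have bl : b l = a l by apply: val_inj; rewrite e.
    by rewrite bl anti1_ac.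
  exists (e1 l (m4 (a l) (b l))); rewrite !nstr_e1.
  by case/andP: (third_ac hal hbl ne) => -> ->.
have [k hk] := nid_ex na; have [l hl] := nid_ex nb.
have hbk : val (b k) == 0%N by move: (none k); rewrite /= hk /= => /negbFE.
have hal : val (a l) == 0%N by move: (none l); rewrite /= hl andbT => /negbFE.
have kl : k != l by apply/eqP => e; move: hk; rewrite e hal.
exists (e2 k l (if val (a k) == 1%N then inord 3 else inord 1) (if val (b l) == 1%N then inord 3 else inord 1)).
rewrite !nstr_e2 // !anti1_ac //.
by rewrite /ac4 (eqP hal) (eqP hbk).
Qed.

Lemma nstrC (a b : pstring q) : nstr a b = nstr b a.
Proof.
by apply: eq_bigr => k _; rewrite /ac4 andbCA; congr (_ && (_ && _)); rewrite eq_sym.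
Qed.

Definition good (U : 'M[C]_(2 ^ q)) := clifford U /\ clifford (adjmx U).

Lemma trans_ex (tau t : Sig q) : exists U : 'M[C]_(2 ^ q), good U /\
  exists b : bool, U *m sigq C tau *m adjmx U = (-1) ^+ b *: sigq C t.
Proof.
have [r /andP[h1 h2]] := anti_exists (valP tau) (valP t).
rewrite nstrC in h2.
pose U1 := swapU (val tau) r; pose U2 := swapU r (val t).
exists (U2 *m U1); split.
  split; first by apply: clifford_mul; apply: swap_cliff.
  by rewrite adjmxM !swap_adj; apply: clifford_mul; apply: swap_cliff.
exists false; rewrite expr0 scale1r !sigqE -scalemxAr -scalemxAl; congr (_ *: _).
have -> : forall A B X : 'M[C]_(2 ^ q), A *m B *m X *m adjmx (A *m B) = A *m (B *m X *m adjmx B) *m adjmx A.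
  by move=> A B X; rewrite adjmxM !mulmxA.
by rewrite /U1 /U2 (swap_map h1) (swap_map h2).
Qed.

Lemma phi2_comp (A B : 'M[C]_(2 ^ q)) X : phi2 A (phi2 B X) = phi2 (A *m B) X.
Proof. by rewrite /phi2 tprodE adjmxM !mulmxA. Qed.

Lemma phi2_tprod (U X Y : 'M[C]_(2 ^ q)) :
  phi2 U (tprod X Y) = tprod (U *m X *m adjmx U) (U *m Y *m adjmx U).
Proof. by rewrite /phi2 adjmx_tprod !tprodE. Qed.

Lemma phi2_is_linear (U : 'M[C]_(2 ^ q)) : linear (phi2 U).
Proof. by move=> a X Y; rewrite /phi2 mulmxDr mulmxDl -scalemxAr -scalemxAl. Qed.

HB.instance Definition _ (U : 'M[C]_(2 ^ q)) :=
  GRing.isSemilinear.Build C _ _ _ (phi2 U) (GRing.semilinear_linear (phi2_is_linear U)).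

Definition phiL (U : 'M[C]_(2 ^ q)) : 'End('M[C]_(2 ^ q * 2 ^ q)) := linfun (phi2 U).
Lemma phiLE U X : phiL U X = phi2 U X. Proof. by rewrite lfunE. Qed.

Lemma phi2_inv (U : 'M[C]_(2 ^ q)) X : unitary U -> phi2 (adjmx U) (phi2 U X) = X.
Proof.
move=> hu; rewrite phi2_comp (mulmx1C hu) /phi2 tprod1 adjmx1 mul1mx mulmx1 //.
Qed.

Lemma phiL_inj U : unitary U -> lker (phiL U) = 0%VS.
Proof.
move=> hu; apply/eqP/lker0P => X Y; rewrite !phiLE => e.
by rewrite -(phi2_inv X hu) e phi2_inv.
Qed.

Lemma Vtau_gen (t a b : Sig q) : sigq C a *m sigq C b \in <[sigq C t]>%VS ->
  tprod (sigq C a) (sigq C b) \in Vtau C t.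
Proof.
move=> h; apply: memv_span; apply/mapP; exists (a, b) => //.
by rewrite mem_filter /= h mem_enum.
Qed.

Lemma Vspace_gen (a b : Sig q) : sigq C a != sigq C b ->
  tprod (sigq C a) (sigq C b) \in Vspace C q.
Proof.
move=> h; apply: memv_span; apply/mapP; exists (a, b) => //.
by rewrite mem_filter /= h mem_enum.
Qed.

Lemma sign_sq (b : bool) : (-1) ^+ b * (-1) ^+ b = 1 :> C.
Proof. by rewrite -expr2 sqrr_sign. Qed.

Lemma phi_Vtau (U : 'M[C]_(2 ^ q)) (tau t : Sig q) (b : bool) : clifford U ->
  U *m sigq C tau *m adjmx U = (-1) ^+ b *: sigq C t ->
  (phiL U @: Vtau C tau <= Vtau C t)%VS.
Proof.
move=> hU hb; have hu' := mulmx1C hU.1.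
rewrite limg_span; apply/span_subvP => X /mapP [Y /mapP[[a c] hin ->] ->].
move: hin; rewrite mem_filter /= => /andP[/vlineP [k hk] _].
rewrite phiLE phi2_tprod.
have [a' [ba ha]] := cliff_sig a hU; have [c' [bc hc]] := cliff_sig c hU.
rewrite ha hc tprodZ; apply: rpredZ; apply: Vtau_gen.
have e : sigq C a' *m sigq C c' = ((-1) ^+ ba * (-1) ^+ bc) *:
   ((U *m sigq C a *m adjmx U) *m (U *m sigq C c *m adjmx U)).
  rewrite ha hc -(scalemxAl ((-1) ^+ ba)) -(scalemxAr ((-1) ^+ bc)) scalerA scalerA.
  by rewrite -mulrA mulrACA !sign_sq mulr1 scale1r.
rewrite e; apply: rpredZ.
rewrite !mulmxA -(mulmxA _ (adjmx U)) hu' mulmx1 -(mulmxA U) hk -scalemxAr -scalemxAl hb.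
by apply: rpredZ; apply: rpredZ; exact: memv_line.
Qed.

Notation MM := ('M[C]_(2 ^ q * 2 ^ q)).
Definition ip (X Y : MM) : C := \tr (adjmx X *m Y).

Lemma ip_addr X : {morph ip X : Y Z / Y + Z}.
Proof. by move=> Y Z; rewrite /ip mulmxDr mxtraceD. Qed.
Lemma ip_addl Y : {morph ip^~ Y : X Z / X + Z}.
Proof. by move=> X Z; rewrite /ip adjmxD mulmxDl mxtraceD. Qed.
Lemma ip0r X : ip X 0 = 0. Proof. by rewrite /ip mulmx0 mxtrace0. Qed.
Lemma ip0l Y : ip 0 Y = 0.
Proof. by rewrite /ip (_ : adjmx 0 = 0) ?mul0mx ?mxtrace0 //; apply/matrixP=> i j; rewrite !mxE rmorph0. Qed.
Lemma ipZr X a Y : ip X (a *: Y) = a * ip X Y.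
Proof. by rewrite /ip -scalemxAr mxtraceZ. Qed.
Lemma ipZl X a Y : ip (a *: X) Y = a^* * ip X Y.
Proof. by rewrite /ip adjmxZ -scalemxAl mxtraceZ. Qed.
Lemma ip_sumr (I : finType) X (F : I -> MM) : ip X (\sum_i F i) = \sum_i ip X (F i).
Proof. exact: (big_morph (ip X) (ip_addr X) (ip0r X)). Qed.
Lemma ip_suml (I : finType) Y (F : I -> MM) : ip (\sum_i F i) Y = \sum_i ip (F i) Y.
Proof. exact: (big_morph (ip^~ Y) (ip_addl Y) (ip0l Y)). Qed.

Lemma ip_self_eq0 X : ip X X = 0 -> X = 0.
Proof.
rewrite /ip /mxtrace => h; apply/matrixP => j i; rewrite mxE.
have h1 : forall i0 : 'I_(2 ^ q * 2 ^ q), 0 <= (adjmx X *m X) i0 i0.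
  move=> i1; rewrite mxE; apply: sumr_ge0 => j1 _; rewrite !mxE mulrC -normCK.
  exact: exprn_ge0.
have := psumr_eq0P (fun i1 _ => h1 i1) h (i := i) isT; rewrite mxE => h2.
have h3 : forall j0 : 'I_(2 ^ q * 2 ^ q), 0 <= (adjmx X) i j0 * X j0 i.
  by move=> j1; rewrite !mxE mulrC -normCK; exact: exprn_ge0.
have := psumr_eq0P (fun j1 _ => h3 j1) h2 (i := j) isT.
rewrite !mxE mulrC -normCK => /eqP; rewrite expf_eq0 /= normr_eq0 => /eqP.
exact.
Qed.

Lemma ip_gen (a b c d : Sig q) :
  ip (tprod (sigq C a) (sigq C b)) (tprod (sigq C c) (sigq C d)) =
  (if a == c then 1 else 0) * (if b == d then 1 else 0).
Proof. by rewrite /ip adjmx_tprod !sigq_adj -tprodE mxtrace_prod !sigq_trM. Qed.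

Lemma sigqM_neq0 (a b : Sig q) : sigq C a *m sigq C b != 0.
Proof.
apply/eqP => h.
have : sigq C a *m sigq C b *m (sigq C b *m sigq C a) = (kap * kap * (kap * kap)) *: 1%:M.
  by rewrite -mulmxA (mulmxA (sigq C b)) sigq_sq -scalemxAl mul1mx -scalemxAr sigq_sq scalerA.
rewrite h mul0mx => /esym /eqP; rewrite scaler_eq0 (negbTE mx1_neq0) orbF.
by rewrite !mulf_eq0 (negbTE kap_neq0).
Qed.

Lemma gen_orth (s t a b c d : Sig q) : s != t ->
  sigq C a *m sigq C b \in <[sigq C s]>%VS -> sigq C c *m sigq C d \in <[sigq C t]>%VS ->
  ip (tprod (sigq C a) (sigq C b)) (tprod (sigq C c) (sigq C d)) = 0.
Proof.
move=> st /vlineP[k hk] /vlineP[m hm]; rewrite ip_gen.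
case: (eqVneq a c) => [ac|]; last by rewrite mul0r.
case: (eqVneq b d) => [bd|]; last by rewrite mulr0.
exfalso; subst c d.
have : (k *: sigq C s) *m sigq C s = (m *: sigq C t) *m sigq C s by rewrite -hk -hm.
move/(congr1 mxtrace); rewrite -(scalemxAl k) -(scalemxAl m) !mxtraceZ !sigq_trM eqxx eq_sym (negbTE st).
rewrite mulr0 mulr1 => k0; move: (sigqM_neq0 a b); rewrite hk k0 scale0r eqxx //.
Qed.

Lemma span_expand (S : seq MM) (X : MM) : X \in <<S>>%VS ->
  exists c : 'I_(size S) -> C, X = \sum_i c i *: S`_i.
Proof. move=> h; exists (fun i => coord (in_tuple S) i X); exact: (@coord_span _ _ _ (in_tuple S) X h). Qed.

Lemma orth_span (s t : Sig q) (X Y : MM) : s != t -> X \in Vtau C s -> Y \in Vtau C t ->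
  ip X Y = 0.
Proof.
move=> st /span_expand [c ->] /span_expand [d ->].
rewrite ip_suml big1 // => i _; rewrite ipZl ip_sumr big1 ?mulr0 // => j _.
rewrite ipZr.
have /mapP [[a b] hab ->] := mem_nth 0 (ltn_ord i).
have /mapP [[c' d'] hcd ->] := mem_nth 0 (ltn_ord j).
move: hab hcd; rewrite !mem_filter /= => /andP[h1 _] /andP[h2 _].
by rewrite (gen_orth st h1 h2) mulr0.
Qed.

Lemma indep (us : Sig q -> MM) : (forall t, us t \in Vtau C t) -> \sum_t us t = 0 ->
  forall t, us t = 0.
Proof.
move=> hus hsum t; apply: ip_self_eq0.
have := ip0r (us t); rewrite -hsum ip_sumr (bigD1 t) //= big1 ?addr0 //.
by move=> s st; apply: orth_span; rewrite ?hus // eq_sym.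
Qed.

End Pauli.

Lemma mem_sum_sup (C : numClosedFieldType) (q : nat) (Vs : Sig q -> {vspace 'M[C]_(2 ^ q * 2 ^ q)})
  t X : X \in Vs t -> X \in (\sum_(t : Sig q) Vs t)%VS.
Proof. by move=> h; apply: (subvP (sumv_sup t _ (subvv (Vs t)))). Qed.

Lemma part1 (C : numClosedFieldType) (q : nat) :
  Vspace C q = (\sum_(t : Sig q) Vtau C t)%VS.
Proof.
apply/eqP; rewrite eqEsubv; apply/andP; split.
  apply/span_subvP => X /mapP [[a b] hin ->]; move: hin; rewrite mem_filter /= => /andP[hab _].
  have ab : val a != val b by apply: contraNneq hab => e; rewrite (val_inj e).
  have hm : mulstr (val a) (val b) != idstr q by rewrite mulstr_id.
  pose t : Sig q := exist (fun s => s != [ffun => ord0]) (mulstr (val a) (val b)) hm.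
  apply: (mem_sum_sup (t := t)); apply: Vtau_gen; apply/vlineP.
  exists (kap C q * 'i ^+ estr (val a) (val b)).
  by rewrite !sigqE -scalemxAl -scalemxAr pstr_mul !scalerA mulrAC.
apply/subv_sumP => t _; apply/span_subvP => X /mapP [[a b] hin ->].
move: hin; rewrite mem_filter /= => /andP[/vlineP [k hk] _]; apply: Vspace_gen.
apply/eqP => e; move: hk; rewrite e sigq_sq sigqE scalerA => hk.
have kk : k * kap C q != 0.
  apply/eqP => k0; move: hk; rewrite k0 scale0r => /eqP.
  by rewrite scaler_eq0 (negbTE (mx1_neq0 _ _)) orbF mulf_eq0 (negbTE (kap_neq0 _ _)).
move: (valP t); rewrite -/(idstr q) => /negP; apply; apply/eqP.
apply: (@pstr_nonscalar _ _ _ ((k * kap C q)^-1 * (kap C q * kap C q))).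
by rewrite -scalerA hk scalerA mulVf // scale1r.
Qed.

Lemma conjM (C : numClosedFieldType) n (A B X : 'M[C]_n) :
  A *m B *m X *m adjmx (A *m B) = A *m (B *m X *m adjmx B) *m adjmx A.
Proof. by rewrite adjmxM !mulmxA. Qed.

Theorem lemma7 (C : numClosedFieldType) (q : nat) (hq : (1 <= q)%N) :
  (* (1) *)
  (Vspace C q = (\sum_(t : Sig q) Vtau C t)%VS
   /\ directv (\sum_(t : Sig q) Vtau C t)%VS)
  /\
  (* (2) *)
  (forall (tau : Sig q) (Wt : {vspace 'M[C]_(2 ^ q * 2 ^ q)}),
     (Wt <= Vtau C tau)%VS ->
     (forall U : 'M[C]_(2 ^ q), clifford_tau tau U -> phi2_stable U Wt) ->
     exists Wf : Sig q -> {vspace 'M[C]_(2 ^ q * 2 ^ q)},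
       Wf tau = Wt /\
       (forall t, (Wf t <= Vtau C t)%VS /\ vs_iso Wt (Wf t)) /\
       directv (\sum_(t : Sig q) Wf t)%VS /\
       (forall U : 'M[C]_(2 ^ q), clifford U ->
          phi2_stable U (\sum_(t : Sig q) Wf t)%VS)).
Proof.
split.
  split; first exact: part1.
  apply/directv_sum_independent => us hus hsum t _.
  by apply: (indep _ hsum) => s; exact: hus s isT.
move=> tau Wt hW hst.
have [Uf hUf] := fin_all_exists (@trans_ex C q tau).
have ctau : forall (U : 'M[C]_(2 ^ q)) (b : bool), clifford U ->
    U *m sigq C tau *m adjmx U = (-1) ^+ b *: sigq C tau -> clifford_tau tau U.
  move=> U b hU hb; split => //; case: b hb => hb; [right|left]; move: hb;
  by rewrite ?expr1 ?expr0 ?scaleN1r ?scale1r.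
pose Wf t := (phiL (Uf t) @: Wt)%VS.
have WfV : forall t, (Wf t <= Vtau C t)%VS.
  move=> t; have [[hc _] [b hb]] := hUf t.
  exact: subv_trans (limgS _ hW) (phi_Vtau hc hb).
exists Wf; split.
  have [[hc _] [b hb]] := hUf tau.
  apply/eqP; rewrite eqEdim; apply/andP; split.
    apply/subvP => X /memv_imgP [Y hY ->]; rewrite phiLE; exact: hst (ctau _ _ hc hb) _ hY.
  by rewrite limg_dim_eq // phiL_inj ?capv0 //; case: hc.
split.
  move=> t; split; first exact: WfV.
  have [[hc _] _] := hUf t.
  by exists (phiL (Uf t)); split => //; rewrite phiL_inj ?cap0v //; case: hc.
split.
  apply/directv_sum_independent => us hus hsum t _; apply: (indep _ hsum) => s.
  exact: (subvP (WfV s)) (hus s isT).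
move=> U hU X /memv_sumP [xs hxs ->].
rewrite linear_sum; apply: rpred_sum => t _.
have /memv_imgP [Y hY ->] := hxs t isT.
have [s [b1 hb1]] := cliff_sig t hU.
have [[hct hct'] [bt hbt]] := hUf t.
have [[hcs hcs'] [bs hbs]] := hUf s.
pose W := adjmx (Uf s) *m U *m Uf t.
have hus : Uf s *m adjmx (Uf s) = 1%:M by case: hcs.
have hus' := mulmx1C hus.
have e : phi2 U (phiL (Uf t) Y) = phi2 (Uf s) (phi2 W Y).
  by rewrite phiLE !phi2_comp /W !mulmxA hus mul1mx.
have hs' : adjmx (Uf s) *m sigq C s *m Uf s = (-1) ^+ bs *: sigq C tau.
  have : adjmx (Uf s) *m (Uf s *m sigq C tau *m adjmx (Uf s)) *m Uf s = sigq C tau.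
    by rewrite !mulmxA hus' mul1mx -mulmxA hus' mulmx1.
  rewrite hbs -scalemxAr -scalemxAl => <-.
  by rewrite scalerA sign_sq scale1r.
have hW' : clifford_tau tau W.
  apply: (ctau _ (bt (+) b1 (+) bs)); first by apply: clifford_mul => //; apply: clifford_mul.
  rewrite /W conjM conjM hbt -(scalemxAr ((-1) ^+ bt) U) -(scalemxAl ((-1) ^+ bt)) hb1.
  rewrite -(scalemxAr _ (adjmx (Uf s))) -scalemxAl -(scalemxAr _ (adjmx (Uf s))) -scalemxAl adjmxK hs'.
  by rewrite !scalerA !signr_addb.
change (phi2 U (phiL (Uf t) Y) \in (\sum_t0 Wf t0)%VS); rewrite e; apply: (mem_sum_sup (t := s)); rewrite -phiLE; apply: memv_img.
exact: hst hW' _ hY.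
Qed.
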